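(* Let $t_f>0$, let $S\subset\mathbb R^3$ be a finite set of source points and $C$ a finite set of $N_C\ge1$ QBX centers, each $c\in C$ having an expansion radius $r_c>0$ and being owned by a box $b_c$ of an octree with $c\in b_c$. Define $M_C:=\frac1{N_C}\sum_{c\in C}\big|S\cap\{x:|x-c|_\infty\le4\sqrt3\,r_c/t_f\}\big|$. Then the number of pairs $(s,c)\in S\times C$ such that $c$ is suspended in $b_c$ and $s$ lies in the $2$-near neighborhood of $b_c$ is at most $N_CM_C$.
   Context: An octree is a rooted tree of axis-aligned closed cubes (''boxes'') in $\mathbb R^3$. For a box $b$, $|b|$ denotes its $\ell^\infty$ radius and $c_b$ its center. The $k$-near neighborhood of $b$ is the closed cube $\{x:|x-c_b|_\infty\le|b|(1+2k)\}$. $\mathsf{TCR}(b)$ is the closed Euclidean ball of radius $\sqrt3|b|(1+t_f)$ centered at $c_b$. A center $c\in b$ with radius $r_c$ is suspended in $b$ if for every one of the eight cubes $b'$ of radius $|b|/2$ obtained by bisecting $b$ along each axis that contains $c$, the closed Euclidean ball $\{x:|x-c|_2\le r_c\}$ is not contained in $\mathsf{TCR}(b')$. *)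

(* Defs.v *)
From Stdlib Require Import Reals Lra List Classical ClassicalEpsilon.
Import ListNotations.
Open Scope R_scope.

Definition point : Type := (R * R * R)%type.

Definition px (p : point) : R := fst (fst p).
Definition py (p : point) : R := snd (fst p).
Definition pz (p : point) : R := snd p.

Definition mkpt (x y z : R) : point := (x, y, z).

Definition dist_inf (p q : point) : R :=
  Rmax (Rabs (px p - px q)) (Rmax (Rabs (py p - py q)) (Rabs (pz p - pz q))).

Definition dist2 (p q : point) : R :=
  sqrt ((px p - px q) ^ 2 + (py p - py q) ^ 2 + (pz p - pz q) ^ 2).

(** An axis-aligned closed cube: center c_b and l^infinity radius |b|. *)
Record box : Type := mkBox { bctr : point; brad : R }.

Definition in_box (x : point) (b : box) : Prop := dist_inf x (bctr b) <= brad b.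

Definition sgn (s : bool) : R := if s then 1 else -1.

Definition child (b : box) (sx sy sz : bool) : box :=
  mkBox (mkpt (px (bctr b) + sgn sx * (brad b / 2))
              (py (bctr b) + sgn sy * (brad b / 2))
              (pz (bctr b) + sgn sz * (brad b / 2)))
        (brad b / 2).

Definition near_nbhd (k : nat) (b : box) (x : point) : Prop :=
  dist_inf x (bctr b) <= brad b * (1 + 2 * INR k).

Definition in_ball (c : point) (r : R) (x : point) : Prop := dist2 x c <= r.

Definition TCR (tf : R) (b : box) (x : point) : Prop :=
  in_ball (bctr b) (sqrt 3 * brad b * (1 + tf)) x.

Definition suspended (tf : R) (c : point) (rc : R) (b : box) : Prop :=
  forall sx sy sz : bool,
    in_box c (child b sx sy sz) ->
    ~ (forall x, in_ball c rc x -> TCR tf (child b sx sy sz) x).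

Definition countP {A : Type} (P : A -> Prop) (l : list A) : nat :=
  length (filter (fun a => if excluded_middle_informative (P a) then true else false) l).

Definition sumR {A : Type} (f : A -> R) (l : list A) : R :=
  fold_right (fun a acc => f a + acc) 0 l.

(* Main.v *)
Require Import Defs.
From Stdlib Require Import Reals List Lra Lia ClassicalEpsilon.
Open Scope R_scope.

Lemma abs_le_inv (x m : R) : Rabs x <= m -> - m <= x <= m.
Proof.
  intros H. pose proof (Rle_abs x). pose proof (Rle_abs (-x)).
  rewrite Rabs_Ropp in *. lra.
Qed.

Lemma dinf_le (p q : point) (m : R) : dist_inf p q <= m ->
  - m <= px p - px q <= m /\ - m <= py p - py q <= m /\ - m <= pz p - pz q <= m.
Proof.
  unfold dist_inf; intros H.
  pose proof (Rmax_l (Rabs (px p - px q)) (Rmax (Rabs (py p - py q)) (Rabs (pz p - pz q)))).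
  pose proof (Rmax_r (Rabs (px p - px q)) (Rmax (Rabs (py p - py q)) (Rabs (pz p - pz q)))).
  pose proof (Rmax_l (Rabs (py p - py q)) (Rabs (pz p - pz q))).
  pose proof (Rmax_r (Rabs (py p - py q)) (Rabs (pz p - pz q))).
  split; [|split]; apply abs_le_inv; lra.
Qed.

Lemma dinf_ge (p q : point) (m : R) :
  - m <= px p - px q <= m -> - m <= py p - py q <= m -> - m <= pz p - pz q <= m ->
  dist_inf p q <= m.
Proof.
  unfold dist_inf; intros. repeat apply Rmax_lub; apply Rabs_le; lra.
Qed.

Lemma sqrt_le_of_sq (A y : R) : 0 <= y -> A <= y ^ 2 -> sqrt A <= y.
Proof.
  intros Hy HA. rewrite <- (sqrt_pow2 y Hy). apply sqrt_le_1_alt; lra.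
Qed.

Lemma tri3 (u1 u2 u3 v1 v2 v3 : R) :
  sqrt ((u1+v1)^2 + (u2+v2)^2 + (u3+v3)^2) <=
  sqrt (u1^2+u2^2+u3^2) + sqrt (v1^2+v2^2+v3^2).
Proof.
  set (U := u1^2+u2^2+u3^2). set (V := v1^2+v2^2+v3^2).
  assert (HU : 0 <= U) by (unfold U; nra).
  assert (HV : 0 <= V) by (unfold V; nra).
  pose proof (sqrt_pos U). pose proof (sqrt_pos V).
  pose proof (sqrt_sqrt U HU). pose proof (sqrt_sqrt V HV).
  set (a := sqrt U) in *. set (b := sqrt V) in *.
  assert (CS : (u1*v1+u2*v2+u3*v3)^2 <= U * V).
  { unfold U, V.
    assert (0 <= (u1*v2-u2*v1)^2 + (u1*v3-u3*v1)^2 + (u2*v3-u3*v2)^2).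
    { pose proof (pow2_ge_0 (u1*v2-u2*v1)). pose proof (pow2_ge_0 (u1*v3-u3*v1)).
      pose proof (pow2_ge_0 (u2*v3-u3*v2)). lra. }
    assert ((u1^2+u2^2+u3^2)*(v1^2+v2^2+v3^2) = (u1*v1+u2*v2+u3*v3)^2 +
      ((u1*v2-u2*v1)^2 + (u1*v3-u3*v1)^2 + (u2*v3-u3*v2)^2)) by ring.
    lra. }
  assert (D : u1*v1+u2*v2+u3*v3 <= a * b).
  { assert (0 <= a*b) by nra.
    destruct (Rle_dec (u1*v1+u2*v2+u3*v3) (a*b)) as [h|h]; [exact h|].
    exfalso. assert (a*b < u1*v1+u2*v2+u3*v3) by lra.
    assert (U * V = (a*b)^2) by (rewrite <- H1, <- H2; ring).
    nra. }
  apply sqrt_le_of_sq; [lra|].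
  replace ((a+b)^2) with (a*a + b*b + 2*(a*b)) by ring.
  rewrite H1, H2. unfold U, V. nra.
Qed.

Lemma dist2_tri (x y z : point) : dist2 x z <= dist2 x y + dist2 y z.
Proof.
  unfold dist2.
  replace (px x - px z) with ((px x - px y) + (px y - px z)) by ring.
  replace (py x - py z) with ((py x - py y) + (py y - py z)) by ring.
  replace (pz x - pz z) with ((pz x - pz y) + (pz y - pz z)) by ring.
  apply tri3.
Qed.

Lemma dist2_inf (x y : point) (m : R) : dist_inf x y <= m -> dist2 x y <= sqrt 3 * m.
Proof.
  intros H. assert (Hm : 0 <= m).
  { unfold dist_inf in H. pose proof (Rabs_pos (px x - px y)).
    pose proof (Rmax_l (Rabs (px x - px y)) (Rmax (Rabs (py x - py y)) (Rabs (pz x - pz y)))).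
    lra. }
  apply dinf_le in H. destruct H as [[h1 h2] [[h3 h4] [h5 h6]]].
  unfold dist2. rewrite <- (sqrt_pow2 m Hm). rewrite <- sqrt_mult_alt by lra.
  apply sqrt_le_1_alt. nra.
Qed.

Lemma sqrt3_sq : sqrt 3 * sqrt 3 = 3.
Proof. apply sqrt_sqrt. lra. Qed.

Lemma geom (tf : R) (c s : point) (r : R) (bb : box) :
  0 < tf -> 0 < r -> 0 < brad bb -> in_box c bb ->
  suspended tf c r bb -> near_nbhd 2 bb s ->
  dist_inf s c <= 4 * sqrt 3 * r / tf.
Proof.
  intros Htf Hr Hb Hin Hsus Hnear.
  set (h := brad bb / 2).
  set (sx := if Rle_dec (px (bctr bb)) (px c) then true else false).
  set (sy := if Rle_dec (py (bctr bb)) (py c) then true else false).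
  set (sz := if Rle_dec (pz (bctr bb)) (pz c) then true else false).
  pose proof (dinf_le _ _ _ Hin) as [[a1 a2] [[a3 a4] [a5 a6]]].
  assert (Hc : in_box c (child bb sx sy sz)).
  { unfold in_box, child; simpl. unfold mkpt.
    apply dinf_ge; unfold px, py, pz; simpl; fold (px c) (py c) (pz c)
      (px (bctr bb)) (py (bctr bb)) (pz (bctr bb)).
    - unfold sx; destruct (Rle_dec (px (bctr bb)) (px c)); simpl; lra.
    - unfold sy; destruct (Rle_dec (py (bctr bb)) (py c)); simpl; lra.
    - unfold sz; destruct (Rle_dec (pz (bctr bb)) (pz c)); simpl; lra. }
  pose proof (Hsus _ _ _ Hc) as Hn.
  assert (Hdc : dist2 c (bctr (child bb sx sy sz)) <= sqrt 3 * h).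
  { apply dist2_inf. exact Hc. }
  pose proof sqrt3_sq as S3.
  assert (Hs3 : 0 < sqrt 3) by (apply sqrt_lt_R0; lra).
  assert (Hrh : sqrt 3 * h * tf < r).
  { destruct (Rlt_dec (sqrt 3 * h * tf) r) as [h'|h']; [exact h'|].
    exfalso. apply Hn. intros x Hx. unfold in_ball in Hx. unfold TCR, in_ball.
    pose proof (dist2_tri x c (bctr (child bb sx sy sz))).
    assert (brad (child bb sx sy sz) = h) by reflexivity.
    rewrite H0. nra. }
  apply dinf_le in Hnear. destruct Hnear as [[b1 b2] [[b3 b4] [b5 b6]]].
  assert (HI : INR 2 = 2) by (simpl; lra). rewrite HI in *.
  assert (dist_inf s c <= 12 * h).
  { apply dinf_ge; unfold h; lra. }
  assert (12 * h <= 4 * sqrt 3 * r / tf).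
  { apply (Rmult_le_reg_r tf); [lra|]. unfold Rdiv.
    replace (4 * sqrt 3 * r * / tf * tf) with (4 * sqrt 3 * r) by (field; lra). nra. }
  lra.
Qed.

Lemma countP_cons {A} (P : A -> Prop) a l :
  countP P (a :: l) = ((if excluded_middle_informative (P a) then 1 else 0) + countP P l)%nat.
Proof. unfold countP; simpl. destruct (excluded_middle_informative (P a)); reflexivity. Qed.

Lemma countP_app {A} (P : A -> Prop) l1 l2 :
  countP P (l1 ++ l2) = (countP P l1 + countP P l2)%nat.
Proof. unfold countP. rewrite filter_app, length_app. reflexivity. Qed.

Lemma countP_mono {A} (P Q : A -> Prop) l :
  (forall a, In a l -> P a -> Q a) -> (countP P l <= countP Q l)%nat.
Proof.
  induction l as [|a l IH]; intros H; [unfold countP; simpl; lia|].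
  rewrite !countP_cons.
  assert (IH' := IH (fun x hx => H x (or_intror hx))).
  destruct (excluded_middle_informative (P a)), (excluded_middle_informative (Q a)); try lia.
  exfalso. apply n. apply H; simpl; auto.
Qed.

Lemma count_prod (Q : point -> point -> Prop) (S C : list point) :
  INR (countP (fun sc : point * point => Q (snd sc) (fst sc)) (list_prod S C)) =
  sumR (fun c => INR (countP (Q c) S)) C.
Proof.
  induction S as [|s S IH]; simpl.
  - unfold countP; simpl. induction C; simpl; auto. rewrite <- IHC. lra.
  - rewrite countP_app, plus_INR, IH.
    clear IH. induction C as [|c C IHC]; simpl.
    + unfold countP; simpl; lra.
    + rewrite countP_cons, plus_INR, countP_cons, plus_INR. simpl. lra.
Qed.

Theorem mainTheorem5
  (tf : R) (S C : list point) (r : point -> R) (b : point -> box) :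
  0 < tf ->
  NoDup S ->
  NoDup C ->
  (1 <= length C)%nat ->
  (forall c, In c C -> 0 < r c) ->
  (forall c, In c C -> 0 < brad (b c)) ->
  (forall c, In c C -> in_box c (b c)) ->
  let NC := INR (length C) in
  let MC := / NC * sumR (fun c =>
              INR (countP (fun s => dist_inf s c <= 4 * sqrt 3 * r c / tf) S)) C in
  INR (countP (fun sc : point * point =>
                 suspended tf (snd sc) (r (snd sc)) (b (snd sc)) /\
                 near_nbhd 2 (b (snd sc)) (fst sc))
              (list_prod S C))
  <= NC * MC.
Proof.
  intros Htf _ _ HC Hr Hb Hin NC MC.
  assert (HNC : 0 < NC) by (unfold NC; apply lt_0_INR; lia).
  unfold MC. rewrite <- Rmult_assoc, Rinv_r, Rmult_1_l by lra.
  rewrite <- (count_prod (fun c s => dist_inf s c <= 4 * sqrt 3 * r c / tf)).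
  apply le_INR. apply countP_mono.
  intros [s c] Hsc [Hs Hn]. simpl in *.
  apply in_prod_iff in Hsc as [_ Hc].
  eapply geom; eauto.
Qed.
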